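(* Let $t,\ell,m$ be integers with $1 \le t \le \ell \le m$. Then the minimum distance of the determinantal code $\widehat{C}_{\det}(t;\ell,m)$ equals $$q^{\ell+m-2}\,\nu_{t-1}(\ell-1,m-1).$$
   Context: $q$ is a prime power. For nonnegative integers $a,b,t$, $\nu_t(a,b)$ is the number of $a\times b$ matrices over $\mathbb{F}_q$ of rank at most $t$. Let $\widehat{\mathcal D}_t(\ell,m)\subset\mathbb{P}^{\ell m-1}(\mathbb{F}_q)=\mathbb{P}(\mathrm{Mat}_{\ell\times m}(\mathbb{F}_q))$ be the set of points $[M]$ with $M\ne 0$ and $\mathrm{rk}(M)\le t$; let $\hat n=|\widehat{\mathcal D}_t(\ell,m)|$, enumerate its points $P_1,\dots,P_{\hat n}$ and choose representatives $M_i\in\mathrm{Mat}_{\ell\times m}(\mathbb{F}_q)$ of $P_i$. The determinantal code $\widehat{C}_{\det}(t;\ell,m)\subseteq\mathbb{F}_q^{\hat n}$ is the image of the map sending a linear form $f=\sum_{i,j}f_{ij}X_{ij}$ (with $X=(X_{ij})$ an $\ell\times m$ matrix of indeterminates) to $(f(M_1),\dots,f(M_{\hat n}))$. Its minimum distance is the smallest Hamming weight of a nonzero codeword. *)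

(* Defs.v *)
From HB Require Import structures.
From mathcomp Require Import all_boot all_order all_algebra all_fingroup all_field.
Set Implicit Arguments. Unset Strict Implicit. Unset Printing Implicit Defensive.
Import GRing.Theory.
Local Open Scope ring_scope.

Section Det.
Variable F : finFieldType.

Definition nu (t a b : nat) : nat := #|[set M : 'M[F]_(a, b) | (\rank M <= t)%N]|.

(* Canonical representative of a projective point of P(Mat_{l x m}(F)):
   a nonzero matrix whose first nonzero entry (in the order of mxvec) is 1. *)
Definition normalized (l m : nat) (M : 'M[F]_(l, m)) : bool :=
  [exists k : 'I_(l * m), (mxvec M 0 k == 1) &&
     [forall k' : 'I_(l * m), ((k' < k)%N) ==> (mxvec M 0 k' == 0)]].

Definition detPoints (t l m : nat) : {set 'M[F]_(l, m)} :=
  [set M : 'M[F]_(l, m) | (M != 0) && (\rank M <= t)%N && normalized M].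

Definition npts (t l m : nat) : nat := #|detPoints t l m|.

Definition linform (l m : nat) (f M : 'M[F]_(l, m)) : F :=
  \sum_(i < l) \sum_(j < m) f i j * M i j.

Definition codeword (t l m : nat) (f : 'M[F]_(l, m)) : {ffun 'I_(npts t l m) -> F} :=
  [ffun i => linform f (enum_val (A := mem (detPoints t l m)) i)].

Definition detCode (t l m : nat) : {set {ffun 'I_(npts t l m) -> F}} :=
  [set c | [exists f : 'M[F]_(l, m), c == codeword t f]].

Definition hweight (n : nat) (c : {ffun 'I_n -> F}) : nat := #|[set i | c i != 0]|.

Definition is_min_distance (n : nat) (C : {set {ffun 'I_n -> F}}) (d : nat) : Prop :=
  (exists2 c, c \in C & (c != 0) /\ hweight c = d) /\
  (forall c, c \in C -> c != 0 -> (d <= hweight c)%N).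

End Det.

(* Main.v *)
Require Import Defs.
From HB Require Import structures.
From mathcomp Require Import all_boot all_order all_algebra all_fingroup all_field.
Set Implicit Arguments. Unset Strict Implicit. Unset Printing Implicit Defensive.
Import GRing.Theory.
Local Open Scope ring_scope.

Section S.
Variable F : finFieldType.

Lemma rankMl n p (P : 'M[F]_n) (A : 'M_(n,p)) : P \in unitmx -> \rank (P *m A) = \rank A.
Proof. by move=> uP; rewrite -mxrank_tr trmx_mul mxrankMfree ?mxrank_tr // row_free_unit unitmx_tr. Qed.
Lemma rankMr n p (P : 'M[F]_p) (A : 'M_(n,p)) : P \in unitmx -> \rank (A *m P) = \rank A.
Proof. by move=> uP; rewrite mxrankMfree // row_free_unit. Qed.
Lemma unit_ublock n1 n2 (u : 'M[F]_(n1,n2)) : block_mx 1%:M u 0 1%:M \in unitmx.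
Proof. by rewrite unitmxE det_ublock !det1 mulr1 unitr1. Qed.
Lemma unit_lblock n1 n2 (u : 'M[F]_(n2,n1)) : block_mx 1%:M 0 u 1%:M \in unitmx.
Proof. by rewrite unitmxE det_lblock !det1 mulr1 unitr1. Qed.

Lemma rank_act l' m' (a : 'M[F]_1) (b : 'M_(1,m')) (c : 'M_(l',1)) (D : 'M_(l',m'))
  (y : 'M_(1,l')) (x : 'M_(m',1)) :
  \rank (block_mx a b c D) =
  \rank (block_mx (a - y *m c - b *m x + y *m D *m x) (b - y *m D) (c - D *m x) D).
Proof.
have -> : block_mx (a - y *m c - b *m x + y *m D *m x) (b - y *m D) (c - D *m x) D
  = block_mx 1%:M (- y) 0 1%:M *m block_mx a b c D *m block_mx 1%:M 0 (- x) 1%:M.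
  rewrite !mulmx_block !mul1mx !mul0mx !add0r !mulmx0 !mulmx1 !mulNmx !mulmxN.
  congr block_mx; rewrite ?addr0 ?add0r ?mulmxBl ?mulmxDl ?mulNmx ?mulmxA //.
  by rewrite opprB addrA [LHS]addrAC.
by rewrite rankMr ?unit_lblock // rankMl ?unit_ublock.
Qed.

Lemma rank11 (a : 'M[F]_1) : \rank a = (a != 0).
Proof.
have [->|nz] := eqVneq a 0; first by rewrite mxrank0.
apply/eqP; rewrite eqn_leq rank_leq_row /= lt0n mxrank_eq0 //.
Qed.

Lemma unit11 (a : 'M[F]_1) : (a \in unitmx) = (a != 0).
Proof.
rewrite unitmxE det_mx11 unitfE.
have [->|h] := eqVneq a 0; first by rewrite mxE eqxx.
apply/negP => /eqP h0; move/eqP: h; apply; rewrite [a]mx11_scalar h0.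
by rewrite -scalemx1 scale0r.
Qed.

Lemma rank_schur l' m' (a : 'M[F]_1) (b : 'M_(1,m')) (c : 'M_(l',1)) (D : 'M_(l',m')) :
  a \in unitmx -> \rank (block_mx a b c D) = (\rank (D - c *m invmx a *m b)).+1.
Proof.
move=> ua.
have -> : block_mx a b c D = block_mx 1%:M 0 (c *m invmx a) 1%:M *m
   block_mx a 0 0 (D - c *m invmx a *m b) *m block_mx 1%:M (invmx a *m b) 0 1%:M.
  rewrite !mulmx_block !mul1mx !mul0mx !add0r !mulmx0 !mulmx1 !addr0 !add0r.
  rewrite mulmxA (mulmxV ua) mul1mx -(mulmxA c) (mulVmx ua) mulmx1.
  by rewrite mulmxA addrC subrK.
by rewrite rankMr ?unit_ublock // rankMl ?unit_lblock // rank_diag_block_mx mxrank_unit.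
Qed.

Lemma in_rowspace p n (D : 'M[F]_(p,n)) (b : 'rV_n) :
  (forall x : 'cV_n, D *m x = 0 -> b *m x = 0) -> exists y, b = y *m D.
Proof.
move=> h; suff: (b <= D)%MS by case/submxP => y ->; exists y.
rewrite submxE; apply/eqP/matrixP => i j.
have := h (cokermx D *m delta_mx j 0).
rewrite mulmxA mulmx_coker mul0mx => /(_ erefl) /matrixP /(_ i 0).
by rewrite mulmxA -colE !mxE.
Qed.

Lemma in_colspace p n (D : 'M[F]_(p,n)) (c : 'cV_p) :
  (forall y : 'rV_p, y *m D = 0 -> y *m c = 0) -> exists x, c = D *m x.
Proof.
move=> h; have [y hy] : exists y, c^T = y *m D^T.
  apply: in_rowspace => x hx; apply: trmx_inj; rewrite trmx_mul trmxK trmx0 h //.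
  by rewrite -[D]trmxK -trmx_mul hx trmx0.
by exists y^T; apply: trmx_inj; rewrite trmx_mul trmxK.
Qed.

Definition Qp l' m' (D : 'M[F]_(l',m')) (b : 'rV_m') (c : 'cV_l') : bool :=
  [exists y : 'rV_l', (y *m D == 0) && (y *m c != 0)] ||
  [exists x : 'cV_m', (D *m x == 0) && (b *m x != 0)].
Definition xsol m' (b : 'rV[F]_m') (al : 'M_1) : 'cV_m' := odflt 0 [pick x | b *m x == al].
Definition iota l' m' (D : 'M[F]_(l',m')) (al : 'M_1) b c :=
  if Qp D b c then c else c - D *m xsol b al.

Lemma Qp_shift l' m' (D : 'M[F]_(l',m')) b c x : Qp D b (c - D *m x) = Qp D b c.
Proof.
rewrite /Qp; congr orb; apply: eq_existsb => y.
have [yD0|//] := eqVneq (y *m D) 0.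
by rewrite mulmxBr mulmxA yD0 mul0mx subr0.
Qed.

Lemma iota_inj l' m' (D : 'M[F]_(l',m')) al b : injective (iota D al b).
Proof.
move=> c1 c2; rewrite /iota.
case h1: (Qp D b c1); case h2: (Qp D b c2) => //.
- by move=> e; rewrite e Qp_shift h2 in h1.
- by move=> e; rewrite -e Qp_shift h1 in h2.
- exact: addIr.
Qed.

Lemma Q_rank l' m' (D : 'M[F]_(l',m')) a b c :
  Qp D b c -> \rank (block_mx a b c D) = \rank (block_mx 0 b c D).
Proof.
case/orP => /existsP [z /andP [/eqP zD nz]].
- have ug : z *m c \in unitmx by rewrite unit11.
  rewrite (rank_act a b c D (a *m invmx (z *m c) *m z) 0).
  rewrite !mulmx0 !subr0 -(mulmxA _ z c) -mulmxA (mulVmx ug) mulmx1 subrr.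
  by rewrite addr0 -[_ *m z *m D]mulmxA zD mulmx0 subr0.
- have ug : b *m z \in unitmx by rewrite unit11.
  rewrite (rank_act a b c D 0 (z *m invmx (b *m z) *m a)).
  rewrite !mul0mx !subr0 addr0 !mulmxA (mulmxV ug) mul1mx subrr.
  by rewrite zD !mul0mx subr0.
Qed.

Lemma notQ_ex l' m' (D : 'M[F]_(l',m')) b c :
  ~~ Qp D b c -> exists y0 x0, b = y0 *m D /\ c = D *m x0.
Proof.
case/norP => /existsPn h1 /existsPn h2.
have [y0 hy] : exists y0, b = y0 *m D.
  apply: in_rowspace => x hx; have := h2 x; rewrite hx eqxx /=.
  by move/negbNE/eqP.
have [x0 hx] : exists x0, c = D *m x0.
  apply: in_colspace => y hy'; have := h1 y; rewrite hy' eqxx /=.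
  by move/negbNE/eqP.
by exists y0, x0.
Qed.

Lemma red_rank l' m' (D : 'M[F]_(l',m')) (a : 'M_1) b c y0 x0 :
  b = y0 *m D -> c = D *m x0 ->
  \rank (block_mx a b c D) = addn (\rank (a - y0 *m c)) (\rank D).
Proof.
move=> hb hc; rewrite (rank_act a b c D y0 x0) -rank_diag_block_mx.
by rewrite hb hc !subrr mulmxA subrK.
Qed.

Lemma iota_rank l' m' (D : 'M[F]_(l',m')) al b c :
  leq (\rank (block_mx 0 b (iota D al b c) D)) (\rank (block_mx al b c D)).
Proof.
rewrite /iota; case hQ: (Qp D b c); first by rewrite (Q_rank al hQ).
have [y0 [x0 [hb hc]]] := notQ_ex (negbT hQ).
rewrite /xsol; case: pickP => [xs /eqP hxs | hno] /=.
  have hc' : c - D *m xs = D *m (x0 - xs) by rewrite hc mulmxBr.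
  rewrite (red_rank 0 hb hc') (red_rank al hb hc) leq_add2r.
  by rewrite mulmxBr mulmxA -hb hxs sub0r opprB.
rewrite mulmx0 subr0 (red_rank 0 hb hc) (red_rank al hb hc) leq_add2r.
suff -> : y0 *m c = 0 by rewrite !subr0 mxrank0.
rewrite hc mulmxA -hb; apply/eqP; apply: contraT => nz.
have ug : b *m x0 \in unitmx by rewrite unit11.
have := hno (x0 *m invmx (b *m x0) *m al).
by rewrite !mulmxA (mulmxV ug) mul1mx eqxx.
Qed.

Lemma G1 l' m' t (g : 'M[F]_(l',m') -> 'M[F]_1) :
  leq #|[set M : 'M[F]_(1 + l', 1 + m') | (\rank M <= t)%N && (ulsubmx M == g (drsubmx M))]|
      #|[set M : 'M[F]_(1 + l', 1 + m') | (\rank M <= t)%N && (ulsubmx M == 0)]|.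
Proof.
set X := [set M | _]; set Y := [set M | _].
pose Phi (M : 'M[F]_(1 + l', 1 + m')) := block_mx 0 (ursubmx M)
  (iota (drsubmx M) (ulsubmx M) (ursubmx M) (dlsubmx M)) (drsubmx M).
have injP : {in X &, injective Phi}.
  move=> M N; rewrite !inE => /andP [_ /eqP hM] /andP [_ /eqP hN] e.
  have eur : ursubmx M = ursubmx N by have := congr1 ursubmx e; rewrite !block_mxKur.
  have edr : drsubmx M = drsubmx N by have := congr1 drsubmx e; rewrite !block_mxKdr.
  have eul : ulsubmx M = ulsubmx N by rewrite hM hN edr.
  have := congr1 dlsubmx e; rewrite !block_mxKdl eur edr eul => /iota_inj edl.
  by rewrite -[M]submxK -[N]submxK eur edr eul edl.
rewrite -(card_in_imset injP); apply: subset_leq_card.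
apply/subsetP => _ /imsetP [M hM ->]; move: hM; rewrite !inE => /andP [hr _].
rewrite block_mxKul eqxx andbT; apply: leq_trans hr.
by rewrite -{2}[M]submxK iota_rank.
Qed.

Lemma linform_tr l m (f M : 'M[F]_(l,m)) : linform f M = \tr (f^T *m M).
Proof.
rewrite /linform /mxtrace exchange_big; apply: eq_bigr => j _; rewrite !mxE.
by apply: eq_bigr => i _; rewrite mxE.
Qed.

Lemma linform_block l' m' (B : 'M[F]_(l',m')) (M : 'M[F]_(1 + l', 1 + m')) :
  linform (block_mx 1%:M 0 0 B) M = ulsubmx M 0 0 + linform B (drsubmx M).
Proof.
rewrite !linform_tr -{1}[M]submxK tr_block_mx mulmx_block mxtrace_block !trmx0 trmx1.
by rewrite mul1mx !mul0mx addr0 add0r /mxtrace big_ord1.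
Qed.

Definition W l m t (f : 'M[F]_(l,m)) :=
  #|[set M : 'M[F]_(l,m) | (\rank M <= t)%N && (linform f M != 0)]|.

Lemma card_split (T : finType) (r p : pred T) :
  (#|[set x | r x && p x]| + #|[set x | r x && ~~ p x]|)%N = #|[set x | r x]|.
Proof.
rewrite -(cardsID [set x | p x] [set x | r x]); congr addn; apply: eq_card => x;
  by rewrite !inE // andbC.
Qed.

Lemma eq11 (u : 'M[F]_1) a : (u == a%:M) = (u 0 0 == a).
Proof.
apply/eqP/eqP => [->|<-]; first by rewrite mxE eqxx mulr1n.
exact: mx11_scalar.
Qed.

Lemma lin_blk_nz l' m' (B : 'M[F]_(l',m')) (M : 'M[F]_(1 + l', 1 + m')) :
  (linform (block_mx 1%:M 0 0 B) M != 0) =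
  ~~ (ulsubmx M == (- linform B (drsubmx M))%:M).
Proof. by rewrite linform_block eq11 addr_eq0. Qed.

Lemma W_blk l' m' t (B : 'M[F]_(l',m')) :
  W t (block_mx 1%:M 0 0 B : 'M[F]_(1 + l', 1 + m')) =
  (#|[set M : 'M[F]_(1 + l', 1 + m') | (\rank M <= t)%N]| -
   #|[set M : 'M[F]_(1 + l', 1 + m') | (\rank M <= t)%N &&
        (ulsubmx M == (- linform B (drsubmx M))%:M)]|)%N.
Proof.
rewrite -(card_split (fun M : 'M[F]_(1 + l', 1 + m') => (\rank M <= t)%N)
  (fun M => ulsubmx M == (- linform B (drsubmx M))%:M)) addKn /W.
by apply: eq_card => M; rewrite !inE lin_blk_nz.
Qed.

Lemma W_lower l' m' t (B : 'M[F]_(l',m')) :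
  leq (W t (block_mx 1%:M 0 0 0 : 'M[F]_(1 + l', 1 + m')))
      (W t (block_mx 1%:M 0 0 B : 'M[F]_(1 + l', 1 + m'))).
Proof.
rewrite !W_blk; apply: leq_sub2l.
have -> : [set M : 'M[F]_(1 + l', 1 + m') | (\rank M <= t)%N &&
        (ulsubmx M == (- linform (0 : 'M_(l',m')) (drsubmx M))%:M)] =
     [set M : 'M[F]_(1 + l', 1 + m') | (\rank M <= t)%N && (ulsubmx M == 0)].
  apply/setP => M; rewrite !inE linform_tr trmx0 mul0mx mxtrace0 oppr0.
  by rewrite -scalemx1 scale0r.
exact: (G1 t (fun D => (- linform B D)%:M)).
Qed.

Lemma W_inv l m t (f : 'M[F]_(l,m)) P Q :
  P \in unitmx -> Q \in unitmx -> W t (P *m f *m Q) = W t f.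
Proof.
move=> uP uQ.
have uPt : P^T \in unitmx by rewrite unitmx_tr.
have uQt : Q^T \in unitmx by rewrite unitmx_tr.
pose phi (M : 'M[F]_(l,m)) := P^T *m M *m Q^T.
have injphi : injective phi.
  move=> M N /(congr1 (fun X => invmx P^T *m X *m invmx Q^T)).
  by rewrite /phi !mulmxA !(mulVmx uPt) !mul1mx !(mulmxK uQt).
rewrite /W -[RHS](card_preimset _ injphi); apply: eq_card => M; rewrite !inE.
rewrite /phi rankMr // rankMl //; congr (_ && (_ != 0)).
rewrite !linform_tr [LHS]mxtrace_mulC [RHS]mxtrace_mulC -!mulmxA [RHS]mxtrace_mulC.
by rewrite !trmx_mul !mulmxA.
Qed.

Lemma pid_blk l' m' r :
  pid_mx r.+1 = block_mx 1%:M 0 0 (pid_mx r) :> 'M[F]_(1 + l', 1 + m').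
Proof.
rewrite -[LHS]submxK; congr block_mx; apply/matrixP => i j; rewrite !mxE /=;
  by rewrite ?ord1 ?add1n ?eqSS ?ltnS.
Qed.

Lemma W_normal l' m' t (f : 'M[F]_(1 + l', 1 + m')) : f != 0 ->
  exists B : 'M[F]_(l',m'), W t f = W t (block_mx 1%:M 0 0 B : 'M[F]_(1 + l', 1 + m')).
Proof.
move=> nz; have := mulmx_ebase f.
have : \rank f != 0%N by rewrite mxrank_eq0.
case: (\rank f) => // r _ e; exists (pid_mx r); rewrite -pid_blk.
have -> : pid_mx r.+1 = invmx (col_ebase f) *m f *m invmx (row_ebase f) :> 'M[F]_(1 + l', 1 + m').
  by rewrite -{2}e !mulmxA (mulVmx (col_ebase_unit f)) mul1mx (mulmxK (row_ebase_unit f)).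
by rewrite W_inv // unitmx_inv ?col_ebase_unit ?row_ebase_unit.
Qed.

Lemma W_delta l' m' t :
  W t.+1 (block_mx 1%:M 0 0 0 : 'M[F]_(1 + l', 1 + m')) =
  (#|F|.-1 * #|F| ^ (l' + m') * nu F t l' m')%N.
Proof.
have -> : W t.+1 (block_mx 1%:M 0 0 0 : 'M[F]_(1 + l', 1 + m')) =
    #|[set M : 'M[F]_(1 + l', 1 + m') | (\rank M <= t.+1)%N && (ulsubmx M != 0)]|.
  apply: eq_card => M; rewrite !inE lin_blk_nz linform_tr trmx0 mul0mx mxtrace0 oppr0.
  by rewrite -scalemx1 scale0r.
pose psi (M : 'M[F]_(1 + l', 1 + m')) := block_mx (ulsubmx M) (ursubmx M) (dlsubmx M)
   (drsubmx M - dlsubmx M *m invmx (ulsubmx M) *m ursubmx M).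
have injpsi : injective psi.
  move=> M N e.
  have eul : ulsubmx M = ulsubmx N by have := congr1 ulsubmx e; rewrite !block_mxKul.
  have eur : ursubmx M = ursubmx N by have := congr1 ursubmx e; rewrite !block_mxKur.
  have edl : dlsubmx M = dlsubmx N by have := congr1 dlsubmx e; rewrite !block_mxKdl.
  have := congr1 drsubmx e; rewrite !block_mxKdr eul eur edl => /addIr edr.
  by rewrite -[M]submxK -[N]submxK eul eur edl edr.
set S2 := [set N : 'M[F]_(1 + l', 1 + m') | (ulsubmx N != 0) && (\rank (drsubmx N) <= t)%N].
have -> : [set M : 'M[F]_(1 + l', 1 + m') | (\rank M <= t.+1)%N && (ulsubmx M != 0)] =
   psi @^-1: S2.
  apply/setP => M; rewrite !inE /psi block_mxKul block_mxKdr.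
  have [nz|] := boolP (ulsubmx M != 0); last by rewrite andbF.
  rewrite andbT /=; rewrite -{1}[M]submxK rank_schur ?unit11 //.
rewrite (card_preimset _ injpsi).
pose beta (x : ('M[F]_1 * 'M[F]_(1,m')) * ('M[F]_(l',1) * 'M[F]_(l',m'))) :=
  block_mx x.1.1 x.1.2 x.2.1 x.2.2 : 'M[F]_(1 + l', 1 + m').
have injb : injective beta.
  move=> [[a b] [c d]] [[a' b'] [c' d']] /eq_block_mx [/= -> -> -> ->] //.
have -> : S2 = beta @: setX (setX [set~ 0] setT) (setX setT [set D : 'M[F]_(l',m') | (\rank D <= t)%N]).
  apply/setP => N; rewrite inE; apply/idP/imsetP.
    case/andP => h1 h2; exists ((ulsubmx N, ursubmx N), (dlsubmx N, drsubmx N)).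
      by rewrite !inE h1 h2.
    by rewrite /beta /= submxK.
  move=> [[[a b] [c d]]]; rewrite !inE /= => /andP [/andP [h1 _] h2] ->.
  by rewrite /beta /= block_mxKul block_mxKdr h1 h2.
rewrite card_imset // !cardsX cardsC1 !cardsT !card_mx /nu.
rewrite !mul1n !muln1 expn1 expnD -!mulnA; congr (_ * _)%N.
by rewrite !mulnA [(_ ^ m' * _)%N]mulnC.
Qed.

Lemma mxvecZ0 l m (a : F) (A : 'M[F]_(l,m)) k : mxvec (a *: A) 0 k = a * mxvec A 0 k.
Proof. by case/mxvec_indexP: k => i j; rewrite !mxvecE mxE. Qed.

Lemma linformZ l m (f M : 'M[F]_(l,m)) a : linform f (a *: M) = a * linform f M.
Proof. by rewrite !linform_tr -scalemxAr mxtraceZ. Qed.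

Lemma linform0 l m (f : 'M[F]_(l,m)) : linform f 0 = 0.
Proof. by rewrite linform_tr mulmx0 mxtrace0. Qed.

Lemma normP l m (N : 'M[F]_(l,m)) : normalized N ->
  exists k : 'I_(l * m), mxvec N 0 k = 1 /\ forall k' : 'I_(l * m), (k' < k)%N -> mxvec N 0 k' = 0.
Proof.
case/existsP => k /andP [/eqP h1 /forallP h2]; exists k; split => // k' lt.
by have := h2 k'; rewrite lt /= => /eqP.
Qed.

Lemma first_nz l m (M : 'M[F]_(l,m)) : M != 0 ->
  exists k : 'I_(l * m), mxvec M 0 k != 0 /\ forall k' : 'I_(l * m), (k' < k)%N -> mxvec M 0 k' = 0.
Proof.
move=> nz.
have [k0 hk0] : exists k0, mxvec M 0 k0 != 0.
  apply/existsP; apply: contraR nz; rewrite negb_exists => /forallP h.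
  by rewrite -mxvec_eq0; apply/eqP/rowP => k; rewrite mxE; apply/eqP; have := h k; rewrite negbK.
case: (@arg_minnP _ k0 (fun k => mxvec M 0 k != 0) (fun k => val k) hk0) => k hk hmin.
exists k; split => // k' lt; apply/eqP; apply: contraTT lt => h; rewrite -leqNgt.
exact: hmin.
Qed.

Lemma proj_count t l m (f : 'M[F]_(l,m)) :
  muln #|F|.-1 #|[set M in detPoints F t l m | linform f M != 0]| = W t f.
Proof.
pose sc (x : F * 'M[F]_(l,m)) : 'M[F]_(l,m) := x.1 *: x.2.
set D := [set M in detPoints F t l m | linform f M != 0].
have inj : {in setX [set~ 0] D &, injective sc}.
  move=> [a N] [b N']; rewrite /D /detPoints !inE /=.
  move=> /andP [a0 /andP [/andP [/andP [_ _] hN] _]] /andP [b0 /andP [/andP [/andP [_ _] hN'] _]] e.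
  have ev j : a * mxvec N 0 j = b * mxvec N' 0 j.
    by rewrite -!mxvecZ0; congr (mxvec _ 0 j).
  have [k [k1 kmin]] := normP hN; have [k2 [k21 k2min]] := normP hN'.
  case: (ltngtP k k2) => [lt|lt|eqk].
  - by move: (ev k); rewrite k1 (k2min _ lt) mulr1 mulr0 => /eqP; rewrite (negPf a0).
  - by move: (ev k2); rewrite k21 (kmin _ lt) mulr1 mulr0 => /eqP; rewrite eq_sym (negPf b0).
  have ek : k = k2 by apply: val_inj.
  have eab : a = b by move: (ev k); rewrite k1 ek k21 !mulr1.
  by move: e; rewrite /sc /= eab => /(scalerI b0) ->.
rewrite -(cardsC1 (0 : F)) -cardsX -(card_in_imset inj) /W; apply: eq_card => M.
rewrite inE; apply/imsetP/andP.
  move=> [[a N]]; rewrite /D /detPoints !inE /= => /andP [a0 /andP [/andP [/andP [_ hr] _] hl]] ->.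
  by rewrite /sc /= mxrank_scale_nz // linformZ mulf_neq0.
move=> [hr hl].
have nzM : M != 0 by apply: contraNneq hl => ->; rewrite linform0.
have [k [kz kmin]] := first_nz nzM.
set c := mxvec M 0 k.
exists (c, c^-1 *: M); last by rewrite /sc /= scalerA mulfV // scale1r.
rewrite /D /detPoints !inE /= kz /= mxrank_scale_nz ?invr_eq0 // hr linformZ mulf_neq0 ?invr_eq0 //.
rewrite scaler_eq0 negb_or invr_eq0 kz nzM /=.
rewrite andbT /normalized; apply/existsP; exists k; rewrite mxvecZ0 mulVf // eqxx /=.
apply/forallP => k'; apply/implyP => lt; by rewrite mxvecZ0 kmin // mulr0.
Qed.

Lemma hw_eq t l m (f : 'M[F]_(l,m)) :
  hweight (codeword t f) = #|[set M in detPoints F t l m | linform f M != 0]|.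
Proof.
rewrite /hweight -(card_imset _ (@enum_val_inj _ (mem (detPoints F t l m)))).
apply: eq_card => M; rewrite inE; apply/imsetP/andP.
  by move=> [i]; rewrite inE ffunE => hi ->; split => //; apply: enum_valP.
move=> [hM hl]; exists (enum_rank_in hM M); last by rewrite enum_rankK_in.
by rewrite inE ffunE enum_rankK_in.
Qed.
End S.

Unset Implicit Arguments.
Local Close Scope ring_scope.

Theorem mainTheorem6 (F : finFieldType) (t l m : nat)
  (h1t : (1 <= t)%N) (htl : (t <= l)%N) (hlm : (l <= m)%N) :
  is_min_distance (detCode F t l m)
    (#|F| ^ (l + m - 2) * nu F t.-1 l.-1 m.-1)%N.
Proof.
case: t h1t htl => // t' _ htl.
case: l htl hlm => // l' _ hlm.
case: m hlm => // m' _.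
have -> : (l'.+1 + m'.+1 - 2 = l' + m')%N by rewrite addSn addnS !subSS subn0.
rewrite /=.
have q1 : (0 < #|F|.-1)%N.
  have : (1 < #|F|)%N by apply/card_gt1P; exists 0%R, 1%R; rewrite eq_sym oner_neq0.
  by case: #|F| => [|[|]].
have key (f : 'M[F]_(1 + l', 1 + m')) :
    (#|F|.-1 * hweight (codeword t'.+1 f))%N = W t'.+1 f by rewrite hw_eq proj_count.
have hnu : (0 < nu F t' l' m')%N.
  by apply/card_gt0P; exists 0%R; rewrite inE mxrank0.
set d := (#|F| ^ (l' + m') * nu F t' l' m')%N.
have dpos : (0 < d)%N by rewrite muln_gt0 expn_gt0 hnu andbT; case: #|F| q1.
set del := (block_mx 1%:M 0 0 0 : 'M[F]_(1 + l', 1 + m'))%R.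
have Wdel : W t'.+1 del = (#|F|.-1 * d)%N by rewrite W_delta mulnA.
split.
  exists (codeword t'.+1 del).
    by rewrite /detCode inE; apply/existsP; exists del.
  have hw : hweight (codeword t'.+1 del) = d.
    by apply/eqP; rewrite -(eqn_pmul2l q1) key Wdel.
  split => //; apply/eqP => c0; move: hw; rewrite c0.
  have -> : hweight (0%R : {ffun 'I_(npts F t'.+1 l'.+1 m'.+1) -> F}) = 0%N.
    by apply: eq_card0 => i; rewrite inE ffunE eqxx.
  by move=> e; rewrite -e in dpos.
move=> c; rewrite /detCode inE => /existsP [f /eqP ->] nz.
have fnz : (f != 0)%R.
  apply: contraNneq nz => ->; apply/eqP/ffunP => i; rewrite !ffunE.
  by rewrite linform_tr trmx0 mul0mx mxtrace0.
have [B eB] := W_normal t'.+1 fnz.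
rewrite -(leq_pmul2l q1) key -Wdel eB; exact: W_lower.
Qed.
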